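(* Let $S,T$ be numerical semigroups, $w\ge1$ an integer and $f(x)\in\mathbb Z[x]$ such that $\mathrm H_S(x^w)f(x)=\mathrm H_T(x)$. Then (a) $f(0)=1$; (b) $f(1)=w$; (c) $f'(1)=w\bigl(\mathrm g(T)-w\,\mathrm g(S)+(w-1)/2\bigr)$; (d) $\mathrm F(T)=w\,\mathrm F(S)+\deg(f)$.
   Context: A numerical semigroup is a submonoid $S$ of $(\mathbb N,+)$ with $\mathbb N\setminus S$ finite. $\mathrm H_S(x)=\sum_{s\in S}x^s$ is its Hilbert series, $\mathrm F(S)$ its Frobenius number (largest integer not in $S$), and $\mathrm g(S)=\#(\mathbb N\setminus S)$ its genus. *)

(* Defs.v *)
From mathcomp Require Import all_boot all_order all_algebra.
Set Implicit Arguments. Unset Strict Implicit. Unset Printing Implicit Defensive.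
Import GRing.Theory Num.Theory.
Local Open Scope ring_scope.

(* The field [ns_cond] is a witness bound beyond which every integer is in S
   (any such bound; the notions below do not depend on its choice). *)
Record numsg := NumSg {
  ns_mem :> nat -> bool;
  ns_0 : ns_mem 0%N;
  ns_add : forall a b, ns_mem a -> ns_mem b -> ns_mem (a + b)%N;
  ns_cond : nat;
  ns_condP : forall n, (ns_cond <= n)%N -> ns_mem n
}.

(* genus: number of gaps (all gaps are < ns_cond). *)
Definition genus (S : numsg) : nat :=
  count (fun n => ~~ S n) (iota 0 (ns_cond S)).

(* Frobenius number: largest integer not in S (= -1 if S = N). *)
Definition frobenius (S : numsg) : int :=
  ((\max_(n < ns_cond S | ~~ S n) n.+1)%N)%:Z - 1.

(* Coefficient of x^n in H_S(x^w) = sum_{s in S} x^(w s). *)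
Definition hilb_pow_coef (S : numsg) (w n : nat) : int :=
  if (w %| n)%N && S (n %/ w)%N then 1 else 0.

(* Coefficient of x^n in H_S(x^w) * f(x). *)
Definition hilb_pow_mul_coef (S : numsg) (w : nat) (f : {poly int}) (n : nat) : int :=
  \sum_(i < n.+1) f`_i * hilb_pow_coef S w (n - i).

(* Coefficient of x^n in H_T(x). *)
Definition hilb_coef (T : numsg) (n : nat) : int := if T n then 1 else 0.

(* Main.v *)
Require Import Defs.
From mathcomp Require Import all_boot all_order all_algebra.
From mathcomp Require Import zify ring.
Import GRing.Theory Num.Theory.
Local Open Scope ring_scope.

Definition Gp (S : numsg) (w : nat) : {poly int} :=
  \sum_(g < ns_cond S | ~~ S g) 'X^(w * g).
Definition Ap S w : {poly int} := 1 - (1 - 'X^w) * Gp S w.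
Definition Mx (S : numsg) : nat := (\max_(n < ns_cond S | ~~ S n) n.+1)%N.

Lemma gap_lt_cond (S : numsg) g : ~~ S g -> (g < ns_cond S)%N.
Proof. move=> h; rewrite ltnNge; apply/negP => /ns_condP; by rewrite (negbTE h). Qed.

Lemma coefG S w n : (0 < w)%N ->
  (Gp S w)`_n = ((w %| n)%N && ~~ S (n %/ w)%N)%:R.
Proof.
move=> w0; rewrite /Gp coef_sum.
under eq_bigr => g _ do rewrite coefXn.
case: (boolP ((w %| n)%N && ~~ S (n %/ w)%N)) => [/andP [dv gp] | hn].
  have lt := @gap_lt_cond S _ gp.
  rewrite (bigD1 (Ordinal lt)) //= mulnC (divnK dv) eqxx big1 ?addr0 //.
  move=> j /andP [_ nj]; case: eqP => // e; exfalso.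
  move: nj; rewrite -val_eqE /= e mulKn //; by rewrite eqxx.
apply: big1 => g gp; case: eqP => // e; exfalso.
by move: hn; rewrite e mulKn // gp andbT dvdn_mulr.
Qed.

Lemma hG S w m : (0 < w)%N ->
  hilb_pow_coef S w m = (w %| m)%N%:R - (Gp S w)`_m.
Proof.
move=> w0; rewrite coefG // /hilb_pow_coef.
by case: (w %| m)%N; case: (S (m %/ w)%N); rewrite /= ?subr0 ?subrr.
Qed.

Lemma coefA S w n : (0 < w)%N -> (Ap S w)`_n =
  (n == 0)%:R - (Gp S w)`_n + (if (n < w)%N then 0 else (Gp S w)`_(n - w)).
Proof.
move=> w0; rewrite /Ap mulrBl mul1r opprB addrA; rewrite !(coefD, coefB, coefN) coef1 coefXnM.
by rewrite addrAC.
Qed.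

Lemma gap_lt_M (S : numsg) g : ~~ S g -> (g < Mx S)%N.
Proof.
move=> h; have lt := @gap_lt_cond S _ h.
exact: (@leq_bigmax_cond _ (fun n : 'I_(ns_cond S) => ~~ S n) (fun n => n.+1) (Ordinal lt)).
Qed.

Arguments gap_lt_M {S g}.
Lemma M_gap (S : numsg) : (0 < Mx S)%N -> ~~ S (Mx S).-1.
Proof.
rewrite /Mx; case: (pickP (fun n : 'I_(ns_cond S) => ~~ S n)) => [i Pi|no].
  rewrite (@bigmax_eq_arg _ i (fun n : 'I_(ns_cond S) => ~~ S n) (fun n => n.+1) Pi) /=.
  by case: arg_maxnP => //= j Pj _.
by rewrite big_pred0.
Qed.
Lemma size_exact (p : {poly int}) d :
  (forall j, (d < j)%N -> p`_j = 0) -> p`_d != 0 -> size p = d.+1.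
Proof.
move=> hz hd; apply/eqP; rewrite eqn_leq; apply/andP; split.
  by apply/leq_sizeP => j; exact: hz.
rewrite ltnNge; apply/negP => hs; move: hd; by rewrite nth_default.
Qed.

Lemma size_A S w : (0 < w)%N -> size (Ap S w) = (w * Mx S).+1.
Proof.
move=> w0; apply: size_exact.
  move=> j hj; rewrite coefA // !coefG //.
  have -> : (j == 0)%N = false by apply/negbTE; lia.
  case: (boolP ((w %| j)%N && ~~ S (j %/ w)%N)) => [/andP [dv gp]|_].
    exfalso; move/dvdnP: dv gp hj => [q ->] gp hj; move: (gap_lt_M gp); rewrite mulnK //; nia.
  case: ifP => // _.
  case: (boolP ((w %| j - w)%N && ~~ S ((j - w) %/ w)%N)) => [/andP [dv gp]|_].
    exfalso; move/dvdnP: dv gp => [q hq] gp; move: (gap_lt_M gp); rewrite hq mulnK //; nia.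
  by rewrite subrr.
rewrite coefA // !coefG //.
case: (posnP (Mx S)) => [->|Mp].
  by rewrite muln0 /= dvdn0 div0n (ns_0 S) /= if_same subr0 addr0 oner_neq0.
have -> : (w * Mx S == 0)%N = false.
  by apply/negbTE; rewrite muln_eq0 negb_or -!lt0n w0 Mp.
rewrite (dvdn_mulr _ (dvdnn w)) mulKn // ltnNge leq_pmulr //=.
have -> : ~~ S (Mx S) = false.
  apply/negbTE; apply/negP => h; have := gap_lt_M h; by rewrite ltnn.
have -> : (w * Mx S - w = w * (Mx S).-1)%N by rewrite -[in LHS](prednK Mp) mulnS addKn.
by rewrite (dvdn_mulr _ (dvdnn w)) mulKn // M_gap.
Qed.

Lemma genusE (S : numsg) : \sum_(g < ns_cond S | ~~ S g) (1 : int) = (genus S)%:R.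
Proof.
rewrite /genus -sum1_count natr_sum -(big_mkord (fun g => ~~ S g) (fun _ => 1)).
by rewrite /index_iota subn0.
Qed.

Lemma hornerG S w : (Gp S w).[1] = (genus S)%:R.
Proof.
rewrite /Gp horner_sum -genusE; apply: eq_bigr => g _; by rewrite hornerXn expr1n.
Qed.

Lemma hornerA S w : (Ap S w).[1] = 1.
Proof. by rewrite /Ap !hornerE expr1n subrr mul0r subr0. Qed.

Lemma derivA S w : ((Ap S w)^`()).[1] = (w * genus S)%:R.
Proof.
rewrite /Ap !derivE !hornerE hornerG expr1n subrr.
by rewrite mul0r addr0 mulNr opprK hornerMn hornerXn expr1n natrM.
Qed.

Definition Qp (w : nat) : {poly int} := \sum_(i < w) 'X^i.

Lemma QE w : 1 - 'X^w = (1 - 'X) * Qp w.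
Proof.
rewrite -{1}(expr1n {poly int} w) subrXX /Qp; congr (_ * _).
by apply: eq_bigr => i _; rewrite expr1n mul1r.
Qed.

Lemma hornerQ w : (Qp w).[1] = w%:R.
Proof.
rewrite /Qp horner_sum (eq_bigr (fun _ => 1)) => [|i _]; last by rewrite hornerXn expr1n.
by rewrite sumr_const card_ord.
Qed.

Lemma coefQ w n : (Qp w)`_n = (n < w)%N%:R.
Proof.
rewrite /Qp coef_sum; under eq_bigr => i _ do rewrite coefXn.
case: (ltnP n w) => h.
  rewrite (bigD1 (Ordinal h)) //= eqxx big1 ?addr0 // => j nj.
  case: eqP => // e; exfalso; move: nj; by rewrite -val_eqE /= e eqxx.
apply: big1 => i _; case: eqP => // e; exfalso; move: (ltn_ord i); rewrite -e; lia.
Qed.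

Lemma size_Q w : (0 < w)%N -> size (Qp w) = w.
Proof.
move=> w0; rewrite -{2}(prednK w0); apply: size_exact.
  move=> j hj; rewrite coefQ; have -> : (j < w)%N = false by lia. by [].
rewrite coefQ; have -> : (w.-1 < w)%N = true by lia. by rewrite oner_neq0.
Qed.

Lemma sum_tri w : (2 * \sum_(i < w) i = w * w.-1)%N.
Proof.
elim: w => [|w IH]; first by rewrite big_ord0.
rewrite big_ord_recr /= mulnDr IH; case: w {IH} => [|w] //=; nia.
Qed.

Lemma derivQ w : (2 * ((Qp w)^`()).[1] = (w * w.-1)%:R)%R.
Proof.
rewrite /Qp raddf_sum horner_sum.
rewrite (eq_bigr (fun i : 'I_w => (i : nat)%:R)) => [|i _]; last first.
  change ((('X^i)^`()).[1] = (i : nat)%:R :> int).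
  by rewrite derivXn hornerMn hornerXn expr1n.
have -> : \sum_(i < w) (i : nat)%:R = (\sum_(i < w) (i : nat))%:R :> int by rewrite natr_sum.
by rewrite -sum_tri natrM.
Qed.

Definition tr (N : nat) (a : nat -> int) : {poly int} := \poly_(i < N) a i.

Lemma coefM_agree (r p q : {poly int}) N :
  (forall i, (i < N)%N -> p`_i = q`_i) -> forall n, (n < N)%N -> (r * p)`_n = (r * q)`_n.
Proof.
move=> h n hn; rewrite !coefM; apply: eq_bigr => j _; rewrite h //.
exact: leq_ltn_trans (leq_subr j n) hn.
Qed.

Lemma key S w N n : (0 < w)%N -> (n < N)%N ->
  ((1 - 'X^w) * tr N (hilb_pow_coef S w))`_n = (Ap S w)`_n.
Proof.
move=> w0 nN; rewrite mulrBl mul1r coefB coefXnM coefA // /tr !coef_poly nN.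
case: ifP => nw.
  rewrite hG // subr0 addr0; congr (_ - _).
  case: (posnP n) => [-> |np]; first by rewrite dvdn0.
  have -> : (w %| n)%N = false.
    by apply/negP => /dvdnP [[|q] hq]; move: nw np; rewrite hq; nia.
  by [].
rewrite ifT; last by lia.
have wn : (w <= n)%N by rewrite leqNgt nw.
rewrite !hG //.
have -> : (w %| n - w)%N = (w %| n)%N by rewrite -{2}(subnK wn) dvdn_addl.
have -> : (n == 0)%N = false by move: w0 nw; lia.
rewrite /=; ring.
Qed.

Lemma main_id S T w f : (0 < w)%N ->
  (forall n : nat, hilb_pow_mul_coef S w f n = hilb_coef T n) ->
  f * Ap S w = Qp w * Ap T 1.
Proof.
move=> w0 hyp; apply/polyP => n.
have ltN : (n < n.+1)%N by [].
rewrite -(@coefM_agree f _ _ n.+1 (fun i hi => @key S w n.+1 i w0 hi) n ltN).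
rewrite mulrCA.
have H : forall i, (i < n.+1)%N -> (f * tr n.+1 (hilb_pow_coef S w))`_i = (tr n.+1 (hilb_pow_coef T 1))`_i.
  move=> i hi; rewrite /tr coef_poly hi.
  have -> : hilb_pow_coef T 1 i = hilb_coef T i by rewrite /hilb_pow_coef dvd1n divn1.
  rewrite -hyp /hilb_pow_mul_coef coefM.
  apply: eq_bigr => j _; rewrite coef_poly ifT //; lia.
rewrite (@coefM_agree _ _ _ n.+1 H n ltN) QE -mulrA mulrCA.
have H2 : forall i, (i < n.+1)%N -> ((1 - 'X) * tr n.+1 (hilb_pow_coef T 1))`_i = (Ap T 1)`_i.
  by move=> i hi; rewrite -(@key T 1 n.+1 i) // expr1.
by rewrite (@coefM_agree _ _ _ n.+1 H2 n ltN).
Qed.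

Theorem lemma12 (S T : numsg) (w : nat) (f : {poly int}) :
  (1 <= w)%N ->
  (forall n : nat, hilb_pow_mul_coef S w f n = hilb_coef T n) ->
  [/\ f.[0] = 1,
      f.[1] = w%:Z,
      ((f^`()).[1])%:~R = (w%:R : rat) * ((genus T)%:R - w%:R * (genus S)%:R
                                          + (w%:R - 1) / 2)
    & frobenius T = w%:Z * frobenius S + ((size f).-1)%:Z].
Proof.
move=> w0 hyp.
have E := @main_id S T w f w0 hyp.
have f0 : f`_0 = 1.
  have := hyp 0%N; rewrite /hilb_pow_mul_coef big_ord1 /hilb_pow_coef /hilb_coef.
  by rewrite dvdn0 div0n !ns_0 /= mulr1.
have f1 : f.[1] = w%:Z.
  have := congr1 (fun p => p.[1]) E; rewrite /= !hornerM !hornerA hornerQ.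
  by rewrite !mulr1 => ->; rewrite natz.
split => //.
- by rewrite horner_coef0.
- have := congr1 (fun p => (p^`()).[1]) E; rewrite /= !derivM !hornerD !hornerM.
  rewrite !hornerA !derivA hornerQ f1 !mulr1 mul1n.
  have hq := derivQ w.
  move=> D.
  set x := f^`().[1] in D *; set q := (Qp w)^`().[1] in D hq.
  have hx : x = (q + w%:R * (genus T)%:R) - (w : int) * (w * genus S)%:R by rewrite -D addrK.
  have h2 : 2 * x = ((w * w.-1) + 2 * (w * genus T))%:R - (2 * (w * (w * genus S)))%:R.
    rewrite hx mulrBr mulrDr hq !natrD !natrM -natz; ring.
  have h3 := congr1 (fun z : int => z%:~R : rat) h2.
  rewrite /= intrM intrB !mulrz_nat in h3.
  move: h3; case: (w) w0 => [|v] // _.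
  rewrite !natrD !natrM /= => h3.
  apply: (@mulfI _ 2); first by [].
  rewrite h3 -!natr1. field. done.
- have fn0 : f != 0 by apply/negP => /eqP fz; move: f0; rewrite fz coef0 => /eqP; rewrite eq_sym oner_eq0.
  have An0 : forall X u, (0 < u)%N -> Ap X u != 0.
    by move=> X u u0; rewrite -size_poly_eq0 size_A.
  have Qn0 : Qp w != 0.
    apply/eqP => /(congr1 (fun p : {poly int} => size p)); rewrite size_Q // size_poly0; lia.
  have := congr1 (fun p : {poly int} => size p) E; rewrite !size_mul // ?An0 // !size_A // size_Q // mul1n /=.
  have := size_poly_gt0 f; rewrite fn0 /frobenius -/(Mx T) -/(Mx S).
  move=> sp; case: (size f) sp => [|s] //= _ hs.
  have hn : (s + w * Mx S + 1 = w + Mx T)%N by move: hs; lia.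
  have h := congr1 Posz hn; rewrite !PoszD PoszM in h.
  have -> : (Mx T : int) = s%:Z + w%:Z * (Mx S)%:Z + 1 - w%:Z by rewrite h addrC addKr.
  ring.
Qed.
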